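(* In the fixed-order setting, for any instance of CAP with $n$ agents and $m$ items, one can decide in $O(nm^3)$ time whether there exists an order-consistent contiguous allocation $\mathbf A$ that is equitable, i.e. $v_i(A_i)=v_j(A_j)$ for all $i,j\in N$, and construct one if it exists.
   Context: An instance of CAP consists of agents $N=[n]$ and indivisible items $M=\{g_1,\dots,g_m\}$ arranged on a path in index order; each agent $i$ has an additive valuation $v_i:2^M\to\mathbb{Z}_{\ge0}$, and every item is valued positively by some agent. An allocation $(A_1,\dots,A_n)$ is a partition of $M$ into possibly empty bundles. It is order-consistent contiguous if there are indices $1=k_1\le k_2\le\dots\le k_{n+1}=m+1$ with $A_i=\{g_{k_i},\dots,g_{k_{i+1}-1}\}$ for all $i$; the fixed-order setting allows only such allocations. *)

(* Defs.v *)
From Stdlib Require Import ZArith.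
From mathcomp Require Import all_boot.
Set Implicit Arguments.
Unset Strict Implicit.
Unset Printing Implicit Defensive.

(* CAP instances: n agents, m items g_0, ..., g_{m-1} on a path        *)
(* (0-indexed).  An additive valuation is given by the item values     *)
(* v i j = v_i({g_j}) in Z_{>=0}.                                      *)

Definition valuation (n m : nat) (v : 'I_n -> 'I_m -> nat) (i : 'I_n)
    (S : {set 'I_m}) : nat :=
  \sum_(j in S) v i j.

Definition items_positively_valued (n m : nat) (v : 'I_n -> 'I_m -> nat) : Prop :=
  forall j : 'I_m, exists i : 'I_n, 0 < v i j.

Definition is_allocation (n m : nat) (A : 'I_n -> {set 'I_m}) : Prop :=
  (forall j : 'I_m, exists i : 'I_n, j \in A i) /\
  (forall (i i' : 'I_n) (j : 'I_m), j \in A i -> j \in A i' -> i = i').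

(* cut indices 0 = k_0 <= k_1 <= ... <= k_n = m (0-indexed version of
   1 = k_1 <= ... <= k_{n+1} = m+1) *)
Definition cut_indices (n m : nat) (k : nat -> nat) : Prop :=
  k 0 = 0 /\ k n = m /\ (forall i, i < n -> k i <= k i.+1).

Definition alloc_of_cuts (n m : nat) (k : nat -> nat) : 'I_n -> {set 'I_m} :=
  fun i => [set j : 'I_m | (k i <= j) && (j < k i.+1)].

Definition order_consistent_contiguous (n m : nat) (A : 'I_n -> {set 'I_m}) : Prop :=
  exists k : nat -> nat, cut_indices n m k /\
    forall i : 'I_n, A i = [set j : 'I_m | (k i <= j) && (j < k i.+1)].

Definition equitable (n m : nat) (v : 'I_n -> 'I_m -> nat)
    (A : 'I_n -> {set 'I_m}) : Prop :=
  forall i j : 'I_n, valuation v i (A i) = valuation v j (A j).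

(* Machine model: a unit-cost RAM given as a while-language over an    *)
(* integer memory Z -> Z (indirect addressing via Deref), with           *)
(* addition, subtraction and comparisons as unit-cost operations.      *)
(* Each executed statement (Skip, Store, each If test, each While       *)
(* test) costs one step; expressions are part of the fixed program,    *)
(* hence of constant size.                                             *)

Inductive aexp : Type :=
| Const : Z -> aexp
| Deref : aexp -> aexp
| Add : aexp -> aexp -> aexp
| Sub : aexp -> aexp -> aexp.

Inductive bexp : Type :=
| BLt : aexp -> aexp -> bexp
| BEq : aexp -> aexp -> bexp
| BNot : bexp -> bexp
| BAnd : bexp -> bexp -> bexp.

Inductive stmt : Type :=
| Skip : stmt
| Store : aexp -> aexp -> stmt
| Seq : stmt -> stmt -> stmt
| If : bexp -> stmt -> stmt -> stmt
| While : bexp -> stmt -> stmt.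

Definition memory := Z -> Z.

Fixpoint aeval (mem : memory) (e : aexp) : Z :=
  match e with
  | Const z => z
  | Deref a => mem (aeval mem a)
  | Add a b => (aeval mem a + aeval mem b)%Z
  | Sub a b => (aeval mem a - aeval mem b)%Z
  end.

Fixpoint beval (mem : memory) (b : bexp) : bool :=
  match b with
  | BLt a c => Z.ltb (aeval mem a) (aeval mem c)
  | BEq a c => Z.eqb (aeval mem a) (aeval mem c)
  | BNot b => negb (beval mem b)
  | BAnd b c => beval mem b && beval mem c
  end.

Definition update (mem : memory) (a v : Z) : memory :=
  fun x => if Z.eqb x a then v else mem x.

Inductive exec : stmt -> memory -> nat -> memory -> Prop :=
| ExSkip mem : exec Skip mem 1 mem
| ExStore mem a e :
    exec (Store a e) mem 1 (update mem (aeval mem a) (aeval mem e))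
| ExSeq s1 s2 mem1 mem2 mem3 t1 t2 :
    exec s1 mem1 t1 mem2 -> exec s2 mem2 t2 mem3 ->
    exec (Seq s1 s2) mem1 (t1 + t2) mem3
| ExIfT b s1 s2 mem mem' t :
    beval mem b = true -> exec s1 mem t mem' ->
    exec (If b s1 s2) mem t.+1 mem'
| ExIfF b s1 s2 mem mem' t :
    beval mem b = false -> exec s2 mem t mem' ->
    exec (If b s1 s2) mem t.+1 mem'
| ExWhileF b s mem :
    beval mem b = false -> exec (While b s) mem 1 mem
| ExWhileT b s mem1 mem2 mem3 t1 t2 :
    beval mem1 b = true -> exec s mem1 t1 mem2 ->
    exec (While b s) mem2 t2 mem3 ->
    exec (While b s) mem1 (t1 + t2).+1 mem3.

(* Input encoding: mem[0] = n, mem[1] = m,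
   mem[2 + i*m + j] = v_i(g_j), every other cell is 0. *)
Definition input_memory (n m : nat) (v : 'I_n -> 'I_m -> nat) : memory :=
  fun x =>
    if Z.eqb x 0 then Z.of_nat n
    else if Z.eqb x 1 then Z.of_nat m
    else if (2 <=? x)%Z then
      let a := (Z.to_nat x - 2)%nat in
      match insub (a %/ m) with
      | Some i =>
          match insub (a %% m) with
          | Some j => Z.of_nat (v i j)
          | None => 0%Z
          end
      | None => 0%Z
      end
    else 0%Z.

(* Main.v *)
Require Import Defs.
From Stdlib Require Import ZArith Lia.
From mathcomp Require Import all_boot zify.
Set Implicit Arguments.
Unset Strict Implicit.
Unset Printing Implicit Defensive.

Section Math.
Variables (n m : nat) (v : 'I_n -> 'I_m -> nat).

Definition w (i j : nat) : nat :=
  match @insub _ (fun x => x < n) _ i, @insub _ (fun x => x < m) _ j with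
  | Some i', Some j' => v i' j'
  | _, _ => 0
  end.

Definition pre (i b : nat) : nat := \sum_(0 <= j < b) w i j.

Fixpoint reach (T : nat) (i b : nat) : bool :=
  match i with
  | 0 => b == 0
  | i'.+1 => has (fun a => reach T i' a && (pre i' b == pre i' a + T)) (iota 0 b.+1)
  end.

Lemma w_ord (i : 'I_n) (j : 'I_m) : w i j = v i j.
Proof.
rewrite /w (insubT (fun x => x < n) (ltn_ord i)) (insubT (fun x => x < m) (ltn_ord j)).
by congr v; apply: val_inj.
Qed.

Lemma pre0 i : pre i 0 = 0.
Proof. by rewrite /pre big_geq. Qed.

Lemma preS i b : pre i b.+1 = pre i b + w i b.
Proof. by rewrite /pre big_nat_recr. Qed.

Lemma pre_mono i a b : a <= b -> pre i a <= pre i b.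
Proof.
move=> ab; rewrite /pre (@big_cat_nat _ _ _ a 0 b) //=; exact: leq_addr.
Qed.

Lemma pre_ord (i : 'I_n) b : b <= m -> pre i b = \sum_(j < m | j < b) v i j.
Proof.
move=> bm; rewrite /pre (big_nat_widen 0 b m) // big_mkord /=.
by apply: eq_bigr => j _; rewrite w_ord.
Qed.

Lemma val_int (i : 'I_n) a b : a <= b -> b <= m ->
  valuation v i [set j : 'I_m | (a <= j) && (j < b)] = pre i b - pre i a.
Proof.
move=> ab bm; rewrite /valuation (pre_ord i bm) (pre_ord i (leq_trans ab bm)).
rewrite (bigID (fun j : 'I_m => j < a) (fun j : 'I_m => j < b)) /=.
have -> : \sum_(i0 < m | (i0 < b) && (i0 < a)) v i i0 = \sum_(j < m | j < a) v i j.
  apply: eq_bigl => j; case: (ltnP j a) => ja; rewrite ?andbF ?andbT //.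
  exact: leq_trans ja ab.
rewrite addKn big_mkcond [RHS]big_mkcond /=; apply: eq_bigr => j _.
by rewrite in_set -leqNgt andbC.
Qed.


Lemma reachS T i b : reach T i.+1 b = [exists a : 'I_b.+1, reach T i a && (pre i b == pre i a + T)].
Proof.
have -> : reach T i.+1 b = has (fun a => reach T i a && (pre i b == pre i a + T)) (iota 0 b.+1) by [].
apply/hasP/existsP.
  case=> a; rewrite mem_iota add0n => /andP [_ ab] H.
  by exists (Ordinal ab).
case=> a H; exists (nat_of_ord a) => //.
by rewrite mem_iota add0n ltn_ord.
Qed.

Lemma cut_mono k : cut_indices n m k -> forall a b, a <= b -> b <= n -> k a <= k b.
Proof.
case=> _ [_ Hk] a b ab bn.
elim: b ab bn => [|b IH] ab bn; first by rewrite leqn0 in ab; rewrite (eqP ab).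
case: (ltnP a b.+1) => h.
  apply: leq_trans (IH h (ltnW bn)) (Hk _ bn).
have -> : a = b.+1 by apply/eqP; rewrite eqn_leq ab h.
done.
Qed.

Lemma cut_le_m k : cut_indices n m k -> forall a, a <= n -> k a <= m.
Proof. move=> H a an; have := cut_mono H an (leqnn n); by case: H => _ [-> _]. Qed.

Lemma cuts_alloc k : cut_indices n m k -> is_allocation (@alloc_of_cuts n m k).
Proof.
move=> H; split.
  move=> j.
  suff X: forall i, i <= n -> k i <= j -> exists i' : 'I_n, (k i' <= j) && (j < k i'.+1).
    have [k0 _] := H.
    have [i' Hi] : exists i' : 'I_n, (k i' <= j) && (j < k i'.+1) by apply: (X 0) => //; rewrite k0.
    by exists i'; rewrite /alloc_of_cuts in_set.
  move=> i; move Hd: (n - i) => d; elim: d i Hd => [|d IH] i Hd iN ki.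
    have ei : i = n by lia.
    have := ltn_ord j; case: H => _ [km _]; rewrite -ei in km; lia.
  case: (ltnP j (k i.+1)) => h.
    have iN' : i < n.
      case: (ltnP i n) => // ni.
      have ei : i = n by lia.
      have := ltn_ord j; case: H => _ [km _]; rewrite -ei in km; lia.
    by exists (Ordinal iN'); rewrite /= ki h.
  apply: (IH i.+1) => //; lia.
move=> i i' j; rewrite /alloc_of_cuts !in_set => /andP [h1 h2] /andP [h3 h4].
apply: val_inj; apply/eqP; rewrite eqn_leq; apply/andP; split; rewrite leqNgt; apply/negP => /= lt.
  have := cut_mono H lt (ltnW (ltn_ord i)); lia.
have := cut_mono H lt (ltnW (ltn_ord i')); lia.
Qed.

Lemma val_cut k (i : 'I_n) : cut_indices n m k ->
  valuation v i [set j : 'I_m | (k i <= j) && (j < k i.+1)] = pre i (k i.+1) - pre i (k i).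
Proof.
move=> H; apply: val_int; first by case: H => _ [_ Hk]; apply: Hk.
exact: cut_le_m H _ (ltn_ord i).
Qed.

Lemma exists_T : 0 < n -> forall A, order_consistent_contiguous A -> equitable v A ->
  exists t, t <= m /\ reach (pre 0 t) n m.
Proof.
move=> n0 A [k [H HA]] Heq.
pose i0 : 'I_n := Ordinal n0.
exists (k 1); split; first exact: cut_le_m H _ n0.
have E : forall i : 'I_n, pre i (k i.+1) = pre i (k i) + pre 0 (k 1).
  move=> i; have := Heq i i0; rewrite !HA !val_cut //= .
  have [k0 _] := H; rewrite k0 pre0 subn0 => E.
  have := pre_mono i (cut_mono H (leqnSn i) (ltn_ord i)); lia.
suff: forall i, i <= n -> reach (pre 0 (k 1)) i (k i).
  by move/(_ n (leqnn n)); have [_ [-> _]] := H.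
elim=> [|i IH] iN; first by have [-> _] := H.
rewrite reachS; apply/existsP.
have ki : k i < (k i.+1).+1 by rewrite ltnS; have [_ [_ Hk]] := H; exact: Hk.
exists (Ordinal ki); rewrite /= IH ?(ltnW iN) //=.
by have := E (Ordinal iN) => /= ->.
Qed.

Lemma from_chain T k : k 0 = 0 -> k n = m ->
  (forall j, j < n -> k j <= k j.+1 /\ pre j (k j.+1) = pre j (k j) + T) ->
  cut_indices n m k /\ equitable v (@alloc_of_cuts n m k).
Proof.
move=> k0 kn Hc.
have H : cut_indices n m k by split=> //; split=> // i /Hc [].
split=> // i j; rewrite /alloc_of_cuts !val_cut //.
have [_ ->] := Hc i (ltn_ord i); have [_ ->] := Hc j (ltn_ord j).
by rewrite !addKn.
Qed.

End Math.

Lemma upd_o mem a y x : x <> a -> update mem a y x = mem x.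
Proof. by move=> h; rewrite /update; case: Z.eqb_spec. Qed.
Lemma upd_s mem a y : update mem a y a = y.
Proof. by rewrite /update Z.eqb_refl. Qed.

Lemma store_ex a e mem x y : aeval mem a = x -> aeval mem e = y ->
  exec (Store a e) mem 1 (update mem x y).
Proof. by move=> <- <-; constructor. Qed.

Lemma while_rule b s (Inv : nat -> memory -> Prop) c :
  (forall k mem, Inv k mem -> beval mem b = true ->
     exists k' mem' t, k' < k /\ exec s mem t mem' /\ Inv k' mem' /\ t <= c) ->
  forall k mem, Inv k mem -> exists k' mem' t, exec (While b s) mem t mem' /\
     Inv k' mem' /\ beval mem' b = false /\ t <= k * c.+1 + 1.
Proof.
move=> Hb k; elim/ltn_ind: k => k IH mem Hi.
case E: (beval mem b).
  have [k' [mem1 [t1 [lt [ex [Hi1 tc]]]]]] := Hb _ _ Hi E.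
  have [k2 [mem2 [t2 [ex2 [Hi2 [E2 tc2]]]]]] := IH _ lt _ Hi1.
  exists k2, mem2, (t1 + t2).+1; split; first by econstructor; eauto.
  split=> //; split=> //.
  have : k' * c.+1 <= k.-1 * c.+1 by apply: leq_mul => //; lia.
  case: k lt {IH Hi} => // k _ /=; rewrite mulSn; lia.
exists k, mem, 1; split; first by constructor.
split=> //; split=> //; lia.
Qed.

Lemma while_cnt b s (Inv : nat -> memory -> Prop) K c :
  (forall i mem, Inv i mem -> beval mem b = (i < K)) ->
  (forall i mem, i < K -> Inv i mem ->
     exists mem' t, exec s mem t mem' /\ Inv i.+1 mem' /\ t <= c) ->
  forall mem, Inv 0 mem -> exists mem' t, exec (While b s) mem t mem' /\
     Inv K mem' /\ t <= K * c.+1 + 1.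
Proof.
move=> Hc Hb mem H0.
have W := @while_rule b s (fun k mem => k <= K /\ Inv (K - k) mem) c.
have H1 : forall k mem, (k <= K /\ Inv (K - k) mem) -> beval mem b = true ->
     exists k' mem' t, k' < k /\ exec s mem t mem' /\ (k' <= K /\ Inv (K - k') mem') /\ t <= c.
  move=> k mem1 [kK Hi] E; rewrite (Hc _ _ Hi) in E.
  have [mem' [t [ex [Hi' tc]]]] := Hb _ _ E Hi.
  exists k.-1, mem', t; split; first lia.
  split=> //; split; first split; first lia.
  by have -> : K - k.-1 = (K - k).+1 by lia.
  done.
have H2 : K <= K /\ Inv (K - K) mem by rewrite subnn.
have [k' [mem' [t [ex [[kK Hi] [E tc]]]]]] := W H1 K mem H2.

rewrite (Hc _ _ Hi) in E.
have ek : K - k' = K by lia.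
exists mem', t; split=> //; split; first by rewrite -ek.
done.
Qed.

Lemma seq_ex s1 s2 mem t1 mem1 (R : memory -> nat -> Prop) :
  exec s1 mem t1 mem1 ->
  (exists mem' t2, exec s2 mem1 t2 mem' /\ R mem' (t1 + t2)) ->
  exists mem' t, exec (Seq s1 s2) mem t mem' /\ R mem' t.
Proof.
move=> e1 [mem' [t2 [e2 q]]]; exists mem', (t1 + t2); split=> //.
by econstructor; eauto.
Qed.

Lemma last_ex s mem t mem1 (R : memory -> nat -> Prop) :
  exec s mem t mem1 -> R mem1 t -> exists mem' t, exec s mem t mem' /\ R mem' t.
Proof. by move=> e q; exists mem1, t. Qed.

Definition input_at (n m : nat) (v : 'I_n -> 'I_m -> nat) (i j : nat) : Z :=
  input_memory v (Z.of_nat (2 + i * m + j)).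

Lemma input_ok (n m : nat) (v : 'I_n -> 'I_m -> nat) i j : j < m ->
  input_memory v (Z.of_nat (2 + i * m + j)) = Z.of_nat (w v i j).
Proof.
move=> jm; rewrite /input_memory.
have -> : Z.eqb (Z.of_nat (2 + i * m + j)) 0 = false by apply/Z.eqb_neq; lia.
have -> : Z.eqb (Z.of_nat (2 + i * m + j)) 1 = false by apply/Z.eqb_neq; lia.
have -> : (2 <=? Z.of_nat (2 + i * m + j))%Z = true by apply/Z.leb_le; lia.
have -> : (Z.to_nat (Z.of_nat (2 + i * m + j)) - 2)%nat = i * m + j by lia.
have m0 : 0 < m by lia.
rewrite divnMDl // divn_small // addn0 modnMDl modn_small //.
rewrite /w. destruct insub; last done. by destruct insub.
Qed.

Notation vN := (-1)%Z.  Notation vM := (-2)%Z. Notation vI := (-3)%Z.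
Notation vB := (-4)%Z.  Notation vA := (-5)%Z. Notation vT := (-6)%Z.
Notation vF := (-7)%Z.  Notation vt := (-8)%Z. Notation vW := (-9)%Z.
Notation vX := (-10)%Z. Notation vC := (-11)%Z.
Notation aP k := (-20 - (k + k))%Z.
Notation aQ k := (-21 - (k + k))%Z.

Notation V x := (Deref (Const x)).
Notation AP e := (Defs.Sub (Const (-20)) (Add e e)).
Notation AQ e := (Defs.Sub (Const (-21)) (Add e e)).
Notation "a +' b" := (Add a b) (at level 50, left associativity).

Lemma zadd a b : (Z.of_nat a + Z.of_nat b)%Z = Z.of_nat (a + b).
Proof. lia. Qed.
Lemma zadd1 a : (Z.of_nat a + 1)%Z = Z.of_nat a.+1.
Proof. lia. Qed.

Lemma ltbZ a b : (Z.of_nat a <? Z.of_nat b)%Z = (a < b).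
Proof. case: Z.ltb_spec => h; symmetry; [apply/idP|apply/negbTE/negP]; lia. Qed.
Lemma eqbZ a b : (Z.of_nat a =? Z.of_nat b)%Z = (a == b).
Proof. case: Z.eqb_spec => h; symmetry; [apply/eqP|apply/negbTE/eqP]; lia. Qed.

Ltac zlit x := match x with Zneg _ => idtac | Zpos _ => idtac | Z0 => idtac end.
Ltac lits := repeat match goal with |- context [Z.eqb ?x ?y] => zlit x; zlit y;
   let b := eval compute in (Z.eqb x y) in change (Z.eqb x y) with b end; cbv beta iota.
Ltac ucase := rewrite /update; cbv beta; lits; repeat (case: Z.eqb_spec => ?; [first [ (exfalso; lia) | (exfalso; nia) | idtac ] | first [ (exfalso; lia) | idtac ]]).

Ltac rw mm := repeat match goal with H : mm ?c = _ |- context [mm ?c] => rewrite H end.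

Definition s_pre_inner : stmt :=
  While (BLt (V vB) (V vM))
    (Seq (Store (AP (V vW +' V vB +' Const 1))
                (Deref (AP (V vW +' V vB)) +' Deref (V vX +' V vB)))
         (Store (Const vB) (V vB +' Const 1))).

Definition s_pre : stmt :=
  Seq (Store (Const vI) (Const 0)) (Seq (Store (Const vW) (Const 0))
  (Seq (Store (Const vX) (Const 2))
  (While (BLt (V vI) (V vN))
    (Seq (Store (AP (V vW)) (Const 0))
    (Seq (Store (Const vB) (Const 0))
    (Seq s_pre_inner
    (Seq (Store (Const vW) (V vW +' V vM +' Const 1))
    (Seq (Store (Const vX) (V vX +' V vM))
         (Store (Const vI) (V vI +' Const 1)))))))))).

Section Prog.
Variables (n m : nat) (v : 'I_n -> 'I_m -> nat).

Definition Base mem := mem vN = Z.of_nat n /\ mem vM = Z.of_nat m.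
Definition Inp mem := forall i j, j < m -> mem (Z.of_nat (2 + i * m + j)) = Z.of_nat (w v i j).
Definition Ptab r mem := forall i b, i < r -> b <= m ->
  mem (aP (Z.of_nat (i * m.+1 + b))) = Z.of_nat (pre v i b).

Lemma idx_lt i i' b b' : i < i' -> b <= m -> i * m.+1 + b < i' * m.+1 + b'.
Proof.
move=> ii bm; have : i.+1 * m.+1 <= i' * m.+1 by apply: leq_mul.
rewrite mulSn; lia.
Qed.

Lemma idx_inj i i' b b' : b <= m -> b' <= m -> i * m.+1 + b = i' * m.+1 + b' -> i = i' /\ b = b'.
Proof.
move=> bm bm' e.
case: (ltngtP i i') => h.
- have := idx_lt b' h bm; lia.
- have := idx_lt b h bm'; lia.
- subst; lia.
Qed.

Definition InvPI i b mem := Base mem /\ Inp mem /\ Ptab i mem /\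
  mem vI = Z.of_nat i /\ mem vW = Z.of_nat (i * m.+1) /\ mem vX = Z.of_nat (2 + i * m) /\
  mem vB = Z.of_nat b /\ b <= m /\
  forall b', b' <= b -> mem (aP (Z.of_nat (i * m.+1 + b'))) = Z.of_nat (pre v i b').

Lemma pre_inner i mem : i < n -> InvPI i 0 mem ->
  exists mem' t, exec s_pre_inner mem t mem' /\ InvPI i m mem' /\ t <= m * 3 + 1.
Proof.
move=> iN H.
have W := (@while_cnt (BLt (V vB) (V vM)) _ (fun b mem => InvPI i b mem) m 2).
apply: W => //.
  move=> b mem1 [[_ hM] [_ [_ [_ [_ [_ [hB _]]]]]]].
  by rewrite /= hM hB ltbZ.
move=> b mem1 bm [hb [hinp [hp [hI [hW [hX [hB [_ hrow]]]]]]]].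
do 2 eexists; split.
  eapply ExSeq; apply: store_ex; reflexivity.
split; last done.
cbn [aeval]; have [hN hM] := hb.
rewrite hW hB hX (zadd (i * m.+1) b) (zadd (2 + i * m) b) zadd1.
split; first by split; ucase.
split; first by move=> i' j jm; ucase; apply: hinp.
split.
  move=> i' b' ii bm'; ucase; apply: hp => //.
do 3 (split; first by ucase).
split; first by ucase; rw mem1; lia.
split; first done.
move=> b' bb'; ucase.
  rewrite hrow // hinp // (_ : b' = b.+1) ?preS; lia.
apply: hrow; lia.
Qed.

Definition InvPO i mem := Base mem /\ Inp mem /\ Ptab i mem /\
  mem vI = Z.of_nat i /\ mem vW = Z.of_nat (i * m.+1) /\ mem vX = Z.of_nat (2 + i * m).

Lemma pre_outer mem : InvPO 0 mem ->
  exists mem' t, exec (While (BLt (V vI) (V vN))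
    (Seq (Store (AP (V vW)) (Const 0))
    (Seq (Store (Const vB) (Const 0))
    (Seq s_pre_inner
    (Seq (Store (Const vW) (V vW +' V vM +' Const 1))
    (Seq (Store (Const vX) (V vX +' V vM))
         (Store (Const vI) (V vI +' Const 1)))))))) mem t mem' /\
    InvPO n mem' /\ t <= n * (m * 3 + 6).+1 + 1.
Proof.
move=> H.
apply: (@while_cnt _ _ InvPO n (m * 3 + 6) _ _ mem H).
  move=> i mem1 [[hN _] [_ [_ [hI _]]]].
  by rewrite /= hN hI ltbZ.
move=> i mem1 iN [hb [hinp [hp [hI [hW hX]]]]].
have [hN hM] := hb.
eapply seq_ex; first (apply: store_ex; reflexivity).
eapply seq_ex; first (apply: store_ex; reflexivity).
set mem2 := update _ _ _.
have H2 : InvPI i 0 mem2.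
  rewrite /mem2; cbn [aeval]; rewrite hW.
  split; first by split; ucase.
  split; first by move=> i' j jm; ucase; apply: hinp.
  split; first by move=> i' b' ii bm'; ucase; apply: hp.
  do 4 (split; first by ucase).
  split; first done.
  move=> b'; rewrite leqn0 => /eqP ->; ucase; rewrite ?pre0 //.
  all: try lia.
have [mem3 [t3 [e3 [H3 tc3]]]] := pre_inner iN H2.
eapply seq_ex; first exact e3.
eapply seq_ex; first (apply: store_ex; reflexivity).
eapply seq_ex; first (apply: store_ex; reflexivity).
eapply last_ex; first (apply: store_ex; reflexivity).
split; last lia.
have [hb3 [hinp3 [hp3 [hI3 [hW3 [hX3 [hB3 [_ hrow3]]]]]]]] := H3.
have [hN3 hM3] := hb3.
cbn [aeval].
split; first by split; ucase.
split; first by move=> i' j jm; ucase; apply: hinp3.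
split.
  move=> i' b' ii bm'; ucase.
  case: (ltngtP i' i) => h; first by apply: hp3.
    lia.
  by rewrite h; apply: hrow3.
split; first by ucase; rw mem3; lia.
split; first by ucase; rw mem3; rewrite mulSn; lia.
by ucase; rw mem3; lia.
Qed.

Definition cnd T i b a := reach v T i a && (pre v i b == pre v i a + T).

Definition qpart T i b lim (q : Z) :=
  (q = 0%Z <-> forall a, a < lim -> ~~ cnd T i b a) /\
  (q <> 0%Z -> exists a, a < lim /\ q = Z.of_nat a.+1 /\ cnd T i b a).

Definition qspec T i b (q : Z) :=
  match i with
  | 0 => q = (if b == 0%N then 1 else 0)%Z
  | i'.+1 => qpart T i' b b.+1 q
  end.

Lemma qpart0 T i b : qpart T i b 0 0.
Proof. by split=> //; split. Qed.

Lemma qpart_step T i b a q : qpart T i b a q ->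
  qpart T i b a.+1 (if cnd T i b a then Z.of_nat a.+1 else q).
Proof.
move=> [h1 h2]; case E: (cnd T i b a).
  split.
    split=> [|H]; first lia.
    by have := H a (ltnSn a); rewrite E.
  move=> _; exists a; split=> //.
split.
  split.
    move=> /h1 H a'; rewrite ltnS leq_eqVlt => /orP [/eqP ->|]; first by rewrite E.
    exact: H.
  move=> H; apply/h1 => a' lt; apply: H; exact: ltnW.
move=> /h2 [a' [lt rest]]; exists a'; split=> //; exact: ltnW.
Qed.

Lemma qspec_reach T i b q : qspec T i b q -> (q <> 0%Z <-> reach v T i b).
Proof.
case: i => [|i].
  by rewrite /= => ->; case: (b == 0); split=> //.
move=> [h1 h2]; rewrite reachS; split.
  move=> /h2 [a [lt [_ c]]]; apply/existsP; exists (Ordinal lt); exact: c.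
move=> /existsP [a c] q0; move/h1: q0 => /(_ a (ltn_ord a)); by rewrite /cnd c.
Qed.

Lemma qspec_par T i b q : qspec T i.+1 b q -> q <> 0%Z ->
  exists a, a <= b /\ q = Z.of_nat a.+1 /\ reach v T i a /\ pre v i b = pre v i a + T.
Proof.
move=> [_ h2] /h2 [a [lt [e /andP [r /eqP p]]]]; exists a; split=> //.
Qed.

End Prog.

Definition s_a : stmt :=
  While (BNot (BLt (V vB) (V vA)))
    (Seq (If (BAnd (BNot (BEq (Deref (AQ (V vW +' V vA))) (Const 0)))
                   (BEq (Defs.Sub (Deref (AP (V vW +' V vB))) (Deref (AP (V vW +' V vA)))) (V vT)))
             (Store (AQ (V vW +' V vM +' Const 1 +' V vB)) (V vA +' Const 1))
             Skip)
         (Store (Const vA) (V vA +' Const 1))).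

Definition s_b : stmt :=
  While (BNot (BLt (V vM) (V vB)))
    (Seq (Store (AQ (V vW +' V vM +' Const 1 +' V vB)) (Const 0))
    (Seq (Store (Const vA) (Const 0))
    (Seq s_a (Store (Const vB) (V vB +' Const 1))))).

Definition s_i : stmt :=
  While (BLt (V vI) (V vN))
    (Seq (Store (Const vB) (Const 0))
    (Seq s_b
    (Seq (Store (Const vW) (V vW +' V vM +' Const 1)) (Store (Const vI) (V vI +' Const 1))))).

Section DP.
Variables (n m : nat) (v : 'I_n -> 'I_m -> nat).

Definition DPctx tt mem := Base n m mem /\ Ptab v n mem /\
  mem vT = Z.of_nat (pre v 0 tt) /\ mem vt = Z.of_nat tt /\ mem vF = 0%Z.

Definition Qtab T r mem := forall i b, i <= r -> b <= m ->
  qspec v T i b (mem (aQ (Z.of_nat (i * m.+1 + b)))).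

Definition InvA tt i b a mem := DPctx tt mem /\ Qtab (pre v 0 tt) i mem /\
  mem vI = Z.of_nat i /\ mem vW = Z.of_nat (i * m.+1) /\ mem vB = Z.of_nat b /\
  mem vA = Z.of_nat a /\ b <= m /\
  (forall b', b' < b -> qspec v (pre v 0 tt) i.+1 b' (mem (aQ (Z.of_nat (i.+1 * m.+1 + b'))))) /\
  qpart v (pre v 0 tt) i b a (mem (aQ (Z.of_nat (i.+1 * m.+1 + b)))).

Lemma leb_negZ a b : (~~ (Z.of_nat b <? Z.of_nat a)%Z) = (a < b.+1).
Proof. by rewrite ltbZ ltnNge negbK ltnS. Qed.

Lemma subeqZ x y T : (Z.of_nat x - Z.of_nat y =? Z.of_nat T)%Z = (x == y + T).
Proof. case: Z.eqb_spec => h; symmetry; [apply/eqP|apply/negbTE/eqP]; lia. Qed.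

Lemma a_loop tt i b mem : i < n -> InvA tt i b 0 mem ->
  exists mem' t, exec s_a mem t mem' /\ InvA tt i b b.+1 mem' /\ t <= b.+1 * 4 + 1.
Proof.
move=> iN H.
apply: (@while_cnt _ _ (fun a mem => InvA tt i b a mem) b.+1 3 _ _ mem H).
  move=> a mem1 [_ [_ [_ [_ [hB [hA _]]]]]].
  by rewrite /= hB hA leb_negZ.
move=> a mem1 ab [[hb [hp [hT [ht hF]]]] [hq [hI [hW [hB [hA [bm [hrow hcur]]]]]]]].
have [hN hM] := hb.
set T := pre v 0 tt in hT hq hrow hcur *.
have am : a <= m by lia.
have Ec : beval mem1 (BAnd (BNot (BEq (Deref (AQ (V vW +' V vA))) (Const 0)))
                   (BEq (Defs.Sub (Deref (AP (V vW +' V vB))) (Deref (AP (V vW +' V vA)))) (V vT)))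
          = cnd v T i b a.
  cbn [beval aeval]; rewrite hW hA hB hT (zadd (i * m.+1) a) (zadd (i * m.+1) b).
  have := hq i a (leqnn i) am => /qspec_reach rq.
  rewrite hp // hp // subeqZ /cnd.
  congr andb.
  case: Z.eqb_spec => h /=.
    by symmetry; apply/negbTE/negP => /rq.
  by symmetry; apply/rq.
have ei : (Z.of_nat (i * m.+1) + Z.of_nat m + 1 + Z.of_nat b)%Z = Z.of_nat (i.+1 * m.+1 + b)
  by rewrite mulSnr; lia.
have em : i.+1 * m.+1 = i * m.+1 + m.+1 by rewrite mulSnr.
have hs := qpart_step hcur.
case E: (cnd v T i b a).
- eapply seq_ex.
    apply: ExIfT; first by rewrite Ec.
    apply: store_ex; reflexivity.
  eapply last_ex; first (apply: store_ex; reflexivity).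
  split; last lia.
  cbn [aeval]; rewrite hW hM hB hA ei zadd1.
  rewrite E in hs.
  split.
    split; first by split; ucase.
    split; first by move=> i0 b0 h1 h2; ucase; exact: hp.
    by do 2 (split; first by ucase); ucase.
  split.
    move=> i' b' ii bm'; ucase; exact: hq.
  do 4 (split; first by ucase; rw mem1; lia).
  split; first done.
  split.
    move=> b' bb'; ucase; exact: hrow.
  by ucase.
- eapply seq_ex.
    apply: ExIfF; first by rewrite Ec.
    constructor.
  eapply last_ex; first (apply: store_ex; reflexivity).
  split; last lia.
  cbn [aeval]; rewrite hA zadd1.
  rewrite E in hs.
  split.
    split; first by split; ucase.
    split; first by move=> i0 b0 h1 h2; ucase; exact: hp.
    by do 2 (split; first by ucase); ucase.
  split.
    move=> i' b' ii bm'; ucase; exact: hq.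
  do 4 (split; first by ucase).
  split; first done.
  split.
    move=> b' bb'; ucase; exact: hrow.
  by ucase.
Qed.

Definition InvB tt i b mem := DPctx tt mem /\ Qtab (pre v 0 tt) i mem /\
  mem vI = Z.of_nat i /\ mem vW = Z.of_nat (i * m.+1) /\ mem vB = Z.of_nat b /\
  (forall b', b' < b -> qspec v (pre v 0 tt) i.+1 b' (mem (aQ (Z.of_nat (i.+1 * m.+1 + b'))))).

Lemma b_loop tt i mem : i < n -> InvB tt i 0 mem ->
  exists mem' t, exec s_b mem t mem' /\ InvB tt i m.+1 mem' /\ t <= m.+1 * (m.+1 * 4 + 4).+1 + 1.
Proof.
move=> iN H.
apply: (@while_cnt _ _ (fun b mem => InvB tt i b mem) m.+1 (m.+1 * 4 + 4) _ _ mem H).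
  move=> b mem1 [[[_ hM] _] [_ [_ [_ [hB _]]]]].
  by rewrite /= hB hM leb_negZ.
move=> b mem1 bm [[hb [hp [hT [ht hF]]]] [hq [hI [hW [hB hrow]]]]].
have [hN hM] := hb.
set T := pre v 0 tt in hT hq hrow *.
have ei : (Z.of_nat (i * m.+1) + Z.of_nat m + 1 + Z.of_nat b)%Z = Z.of_nat (i.+1 * m.+1 + b)
  by rewrite mulSnr; lia.
eapply seq_ex; first (apply: store_ex; reflexivity).
eapply seq_ex; first (apply: store_ex; reflexivity).
set mem2 := update _ _ _.
have H2 : InvA tt i b 0 mem2.
  rewrite /mem2; cbn [aeval]; rewrite hW hM hB ei.
  split.
    split; first by split; ucase.
    split; first by move=> i0 b0 h1 h2; ucase; exact: hp.
    by do 2 (split; first by ucase); ucase.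
  split; first by move=> i' b' ii bm'; ucase; exact: hq.
  do 4 (split; first by ucase).
  split; first lia.
  split; first by move=> b' bb'; ucase; exact: hrow.
  ucase; exact: qpart0.
have [mem3 [t3 [e3 [H3 tc3]]]] := a_loop iN H2.
eapply seq_ex; first exact e3.
eapply last_ex; first (apply: store_ex; reflexivity).
split; last first.
  have : b.+1 * 4 <= m.+1 * 4 by rewrite leq_mul2r; lia.
  lia.
have [[hb3 [hp3 [hT3 [ht3 hF3]]]] [hq3 [hI3 [hW3 [hB3 [hA3 [_ [hrow3 hcur3]]]]]]]] := H3.
have [hN3 hM3] := hb3.
cbn [aeval]; rewrite hB3 zadd1.
split.
  split; first by split; ucase.
  split; first by move=> i0 b0 h1 h2; ucase; exact: hp3.
  by do 2 (split; first by ucase); ucase.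
split; first by move=> i' b' ii bm'; ucase; exact: hq3.
do 3 (split; first by ucase).
move=> b' bb'; ucase.
case: (ltngtP b' b) => h; first exact: hrow3.
  lia.
by rewrite h.
Qed.

Definition InvI tt i mem := DPctx tt mem /\ Qtab (pre v 0 tt) i mem /\
  mem vI = Z.of_nat i /\ mem vW = Z.of_nat (i * m.+1).

Lemma i_loop tt mem : InvI tt 0 mem ->
  exists mem' t, exec s_i mem t mem' /\ InvI tt n mem' /\
    t <= n * (m.+1 * (m.+1 * 4 + 4).+1 + 4).+1 + 1.
Proof.
move=> H.
apply: (@while_cnt _ _ (fun i mem => InvI tt i mem) n _ _ _ mem H).
  move=> i mem1 [[[hN _] _] [_ [hI _]]].
  by rewrite /= hN hI ltbZ.
move=> i mem1 iN [[hb [hp [hT [ht hF]]]] [hq [hI hW]]].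
have [hN hM] := hb.
set T := pre v 0 tt in hT hq *.
eapply seq_ex; first (apply: store_ex; reflexivity).
set mem2 := update _ _ _.
have H2 : InvB tt i 0 mem2.
  rewrite /mem2; cbn [aeval].
  split.
    split; first by split; ucase.
    split; first by move=> i0 b0 h1 h2; ucase; exact: hp.
    by do 2 (split; first by ucase); ucase.
  split; first by move=> i' b' ii bm'; ucase; exact: hq.
  do 3 (split; first by ucase).
  by [].
have [mem3 [t3 [e3 [H3 tc3]]]] := b_loop iN H2.
eapply seq_ex; first exact e3.
eapply seq_ex; first (apply: store_ex; reflexivity).
eapply last_ex; first (apply: store_ex; reflexivity).
split; last lia.
have [[hb3 [hp3 [hT3 [ht3 hF3]]]] [hq3 [hI3 [hW3 [hB3 hrow3]]]]] := H3.
have [hN3 hM3] := hb3.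
cbn [aeval].
split.
  split; first by split; ucase.
  split; first by move=> i0 b0 h1 h2; ucase; exact: hp3.
  by do 2 (split; first by ucase); ucase.
split.
  move=> i' b' ii bm'; ucase.
  case: (ltngtP i' i.+1) => h; first by apply: hq3.
    lia.
  by rewrite h; apply: hrow3.
split; first by ucase; rw mem3; lia.
by ucase; rw mem3; rewrite mulSnr; lia.
Qed.

End DP.

Definition s_init : stmt :=
  Seq (Store (AQ (Const 0)) (Const 1)) (Seq (Store (Const vB) (Const 1))
  (While (BNot (BLt (V vM) (V vB)))
     (Seq (Store (AQ (V vB)) (Const 0)) (Store (Const vB) (V vB +' Const 1))))).

Definition s_tbody : stmt :=
  Seq (Store (Const vT) (Deref (AP (V vt))))
  (Seq s_init
  (Seq (Store (Const vI) (Const 0))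
  (Seq (Store (Const vW) (Const 0))
  (Seq s_i
   (If (BEq (Deref (AQ (V vW +' V vM))) (Const 0))
       (Store (Const vt) (V vt +' Const 1))
       (Store (Const vF) (Const 1))))))).

Section DP2.
Variables (n m : nat) (v : 'I_n -> 'I_m -> nat).

Definition InvR tt k mem := DPctx v tt mem /\ mem vB = Z.of_nat k.+1 /\
  forall b, b <= k -> qspec v (pre v 0 tt) 0 b (mem (aQ (Z.of_nat (0 * m.+1 + b)))).

Lemma init_ok tt mem : DPctx v tt mem ->
  exists mem' t, exec s_init mem t mem' /\ DPctx v tt mem' /\ Qtab v (pre v 0 tt) 0 mem' /\
     t <= m * 3 + 3.
Proof.
move=> [hb [hp [hT [ht hF]]]].
have [hN hM] := hb.
eapply seq_ex; first (apply: store_ex; reflexivity).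
eapply seq_ex; first (apply: store_ex; reflexivity).
set mem2 := update _ _ _.
have H2 : InvR tt 0 mem2.
  rewrite /mem2; cbn [aeval].
  split.
    split; first by split; ucase.
    split; first by move=> i0 b0 h1 h2; ucase; exact: hp.
    by do 2 (split; first by ucase); ucase.
  split; first by ucase.
  by move=> b; rewrite leqn0 => /eqP ->; ucase.
have hc : forall k mem1, InvR tt k mem1 -> beval mem1 (BNot (BLt (V vM) (V vB))) = (k < m).
  move=> k mem1 [[[_ hM1] _] [hB1 _]].
  by rewrite /= hB1 hM1 leb_negZ ltnS.
have hs : forall k mem1, k < m -> InvR tt k mem1 -> exists mem' t,
    exec (Seq (Store (AQ (V vB)) (Const 0)) (Store (Const vB) (V vB +' Const 1))) mem1 t mem' /\
    InvR tt k.+1 mem' /\ t <= 2.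
  move=> k mem1 km [[hb1 [hp1 [hT1 [ht1 hF1]]]] [hB1 hrow1]].
  have [hN1 hM1] := hb1.
  eapply seq_ex; first (apply: store_ex; reflexivity).
  eapply last_ex; first (apply: store_ex; reflexivity).
  split; last lia.
  cbn [aeval]; rewrite hB1.
  split.
    split; first by split; ucase.
    split; first by move=> i0 b0 h1 h2; ucase; exact: hp1.
    by do 2 (split; first by ucase); ucase.
  split; first by ucase; lia.
  move=> b bk; ucase.
  + by rewrite /= (_ : b == 0%N = false) //; apply/negbTE; lia.
  + apply: hrow1; lia.
have [mem3 [t3 [e3 [H3 tc3]]]] :=
  @while_cnt _ _ (fun k mem => InvR tt k mem) m 2 hc hs mem2 H2.
exists mem3, t3; split=> //; split; last first.
  split; last lia.
  have [hc3 [hB3 hrow3]] := H3.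
  move=> i b; rewrite leqn0 => /eqP -> bm; exact: hrow3.
by case: H3.
Qed.

Definition ci := m.+1 * (m.+1 * 4 + 4).+1 + 4.

Definition TPost tt mem := Base n m mem /\ Ptab v n mem /\
  ((reach v (pre v 0 tt) n m = false /\ mem vt = Z.of_nat tt.+1 /\ mem vF = 0%Z) \/
   (reach v (pre v 0 tt) n m = true /\ mem vt = Z.of_nat tt /\ mem vF = 1%Z /\
    Qtab v (pre v 0 tt) n mem /\ mem vI = Z.of_nat n /\ mem vW = Z.of_nat (n * m.+1))).

Lemma tbody_ok tt mem : 0 < n -> tt <= m -> Base n m mem -> Ptab v n mem ->
  mem vt = Z.of_nat tt -> mem vF = 0%Z ->
  exists mem' t, exec s_tbody mem t mem' /\ TPost tt mem' /\ t <= n * ci.+1 + m * 3 + 9.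
Proof.
move=> n0 tm hb hp ht hF.
have [hN hM] := hb.
eapply seq_ex; first (apply: store_ex; reflexivity).
set mem1 := update _ _ _.
have H1 : DPctx v tt mem1.
  rewrite /mem1; cbn [aeval]; rewrite ht.
  have := hp 0 tt n0 tm; rewrite mul0n add0n => hp0.
  split; first by split; ucase.
  split; first by move=> i0 b0 h1 h2; ucase; exact: hp.
  by do 2 (split; first by ucase); ucase.
have [mem2 [t2 [e2 [H2 [Q2 tc2]]]]] := init_ok H1.
eapply seq_ex; first exact e2.
eapply seq_ex; first (apply: store_ex; reflexivity).
eapply seq_ex; first (apply: store_ex; reflexivity).
set mem3 := update _ _ _.
have H3 : InvI v tt 0 mem3.
  have [hb2 [hp2 [hT2 [ht2 hF2]]]] := H2.
  have [hN2 hM2] := hb2.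
  rewrite /mem3; cbn [aeval].
  split.
    split; first by split; ucase.
    split; first by move=> i0 b0 h1 h2; ucase; exact: hp2.
    by do 2 (split; first by ucase); ucase.
  split; first by move=> i' b' ii bm'; ucase; exact: Q2.
  by split; ucase.
have [mem4 [t4 [e4 [H4 tc4]]]] := i_loop H3.
eapply seq_ex; first exact e4.
have [[hb4 [hp4 [hT4 [ht4 hF4]]]] [hq4 [hI4 hW4]]] := H4.
have [hN4 hM4] := hb4.
have hq := hq4 n m (leqnn n) (leqnn m).
have hr := qspec_reach hq.
have Ec : beval mem4 (BEq (Deref (AQ (V vW +' V vM))) (Const 0)) =
          ~~ reach v (pre v 0 tt) n m.
  cbn [beval aeval]; rewrite hW4 hM4 zadd.
  case: Z.eqb_spec => h.
    by symmetry; apply/negP => /hr.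
  by symmetry; apply/negbTE; rewrite negbK; apply/hr.
case E: (reach v (pre v 0 tt) n m).
- eapply last_ex.
    apply: ExIfF; first by rewrite Ec E.
    apply: store_ex; reflexivity.
  split; last first.
    rewrite /ci in tc4 *; lia.
  cbn [aeval].
  split; first by split; ucase.
  split; first by move=> i0 b0 h1 h2; ucase; exact: hp4.
  right; split=> //.
  do 2 (split; first by ucase).
  split; first by move=> i' b' ii bm'; ucase; exact: hq4.
  by split; ucase.
- eapply last_ex.
    apply: ExIfT; first by rewrite Ec E.
    apply: store_ex; reflexivity.
  split; last first.
    rewrite /ci in tc4 *; lia.
  cbn [aeval].
  split; first by split; ucase.
  split; first by move=> i0 b0 h1 h2; ucase; exact: hp4.
  left; split=> //.
  by split; ucase; rw mem4; lia.
Qed.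

End DP2.

Definition tcond := BAnd (BNot (BLt (V vM) (V vt))) (BEq (V vF) (Const 0)).
Definition s_tloop := While tcond s_tbody.

Section TL.
Variables (n m : nat) (v : 'I_n -> 'I_m -> nat).

Definition TI k mem := exists tt, Base n m mem /\ Ptab v n mem /\ mem vt = Z.of_nat tt /\
 ((mem vF = 0%Z /\ tt <= m.+1 /\ (forall t', t' < tt -> reach v (pre v 0 t') n m = false) /\
   k = 2 * (m.+1 - tt) + 1) \/
  (mem vF = 1%Z /\ tt <= m /\ reach v (pre v 0 tt) n m /\ Qtab v (pre v 0 tt) n mem /\
   mem vI = Z.of_nat n /\ mem vW = Z.of_nat (n * m.+1) /\ k = 0)).

Lemma tloop_ok mem : 0 < n -> Base n m mem -> Ptab v n mem -> mem vt = 0%Z -> mem vF = 0%Z ->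
  exists mem' t, exec s_tloop mem t mem' /\ (exists k, TI k mem') /\ beval mem' tcond = false /\
    t <= (2 * m.+1 + 1) * (n * (ci m).+1 + m * 3 + 9).+1 + 1.
Proof.
move=> n0 hb hp ht hF.
have H0 : TI (2 * m.+1 + 1) mem.
  exists 0; split=> //; split=> //; split=> //; left; split=> //; split=> //; split=> //.
suff hs : forall k mem1, TI k mem1 -> beval mem1 tcond = true ->
     exists k' mem' t, k' < k /\ exec s_tbody mem1 t mem' /\ TI k' mem' /\ t <= n * (ci m).+1 + m * 3 + 9.
  have [k' [mem' [t [e [Hi [Ec tc]]]]]] := @while_rule tcond s_tbody TI _ hs _ _ H0.
  by exists mem', t; split=> //; split; first by exists k'.
move=> k mem1 [tt [hb1 [hp1 [ht1 [[hF1 [tm [hno ek]]]|[hF1 _]]]]]] Ec; last first.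
  by move: Ec; rewrite /tcond /= hF1 /= andbF.
have [hN1 hM1] := hb1.
have tm' : tt <= m.
  move: Ec; rewrite /tcond /= hM1 ht1 hF1 leb_negZ andbT; lia.
have [mem2 [t2 [e2 [[hb2 [hp2 hpost]] tc2]]]] := tbody_ok n0 tm' hb1 hp1 ht1 hF1.
case: hpost => [[hr [ht2 hF2]] | [hr [ht2 [hF2 [hq2 [hI2 hW2]]]]]].
- exists (2 * (m.+1 - tt.+1) + 1), mem2, t2; split; first lia.
  split=> //; split=> //.
  exists tt.+1; split=> //; split=> //; split=> //; left; split=> //; split=> //.
  split=> // t' lt; case: (ltngtP t' tt) => h; first exact: hno.
    lia.
  by rewrite h.
- exists 0, mem2, t2; split; first lia.
  split=> //; split=> //.
  exists tt; split=> //; split=> //; split=> //; right; split=> //.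
Qed.

End TL.

Definition s_bt : stmt :=
  While (BLt (Const 0) (V vI))
    (Seq (Store (Const vC) (Defs.Sub (Deref (AQ (V vW +' V vC))) (Const 1)))
    (Seq (Store (Const vW) (Defs.Sub (V vW) (V vM +' Const 1)))
    (Seq (Store (Const vI) (Defs.Sub (V vI) (Const 1)))
         (Store (V vI +' Const 1) (V vC))))).

Definition s_back : stmt :=
  Seq (Store (Const vC) (V vM)) (Seq (Store (V vN +' Const 1) (V vM))
  (Seq s_bt (Store (Const 0) (Const 1)))).

Section BT.
Variables (n m : nat) (v : 'I_n -> 'I_m -> nat).

Definition BI T d mem := Base n m mem /\ Qtab v T n mem /\
  mem vI = Z.of_nat (n - d) /\ mem vW = Z.of_nat ((n - d) * m.+1) /\
  exists k, mem vC = Z.of_nat (k (n - d)) /\ k n = m /\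
    (forall j, n - d <= j -> j <= n ->
       mem (Z.of_nat j.+1) = Z.of_nat (k j) /\ reach v T j (k j) /\ k j <= m) /\
    (forall j, n - d <= j -> j < n -> k j <= k j.+1 /\ pre v j (k j.+1) = pre v j (k j) + T).

Lemma bt_ok T mem : BI T 0 mem ->
  exists mem' t, exec s_bt mem t mem' /\ BI T n mem' /\ t <= n * 5 + 1.
Proof.
move=> H.
have hc : forall d mem1, BI T d mem1 -> d <= n -> beval mem1 (BLt (Const 0) (V vI)) = (d < n).
  move=> d mem1 [_ [_ [hI _]]] dn; rewrite /= hI.
  by case: Z.ltb_spec => h; symmetry; [apply/idP|apply/negbTE/negP]; lia.
suff: exists mem' t, exec s_bt mem t mem' /\ (n <= n /\ BI T n mem') /\ t <= n * 4.+1 + 1.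
  by case=> mem' [t [e [[_ h] tc]]]; exists mem', t.
apply: (@while_cnt _ _ (fun d mem => d <= n /\ BI T d mem) n 4 _ _ mem).
- by move=> d mem1 [dn h]; apply: hc.
- move=> d mem1 dn [_ [hb [hq [hI [hW [k [hC [kn [hk1 hk2]]]]]]]]].
  have [hN hM] := hb.
  have [i' ei] : exists i', n - d = i'.+1 by exists (n - d).-1; lia.
  rewrite ei in hI hW hC hk1 hk2.
  have iln : i'.+1 <= n by lia.
  have [hm [hr km]] := hk1 i'.+1 (leqnn _) iln.
  have hq1 := hq i'.+1 (k i'.+1) iln km.
  have q0 : mem1 (aQ (Z.of_nat (i'.+1 * m.+1 + k i'.+1))) <> 0%Z.
    exact: (proj2 (qspec_reach hq1) hr).
  have [a [ak [qa [ra pa]]]] := qspec_par hq1 q0.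
  eapply seq_ex; first (apply: store_ex; reflexivity).
  eapply seq_ex; first (apply: store_ex; reflexivity).
  eapply seq_ex; first (apply: store_ex; reflexivity).
  eapply last_ex; first (apply: store_ex; reflexivity).
  split; last lia.
  have ew : (Z.of_nat (i'.+1 * m.+1) + Z.of_nat (k i'.+1))%Z = Z.of_nat (i'.+1 * m.+1 + k i'.+1)
    by lia.
  cbn [aeval]; rewrite hW hC ew qa.
  have ed : n - d.+1 = i' by lia.
  split; first lia.
  split; first by split; ucase; rw mem1; lia.
  split; first by move=> i0 b0 h1 h2; ucase; exact: hq.
  rewrite ed.
  split; first by ucase; rw mem1; lia.
  split; first by ucase; rw mem1; rewrite mulSnr in hW *; lia.
  exists (fun j => if j == i' then a else k j).
  rewrite eqxx; split; first by ucase; rw mem1; lia.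
  split; first by rewrite (_ : n == i' = false) //; apply/negbTE; lia.
  split.
    move=> j h1 h2; case: (eqVneq j i') => [->|ne].
      split; first by ucase; rw mem1; lia.
      split=> //; lia.
    have ij : i'.+1 <= j by lia.
    have [e1 [e2 e3]] := hk1 j ij h2.
    split; last done.
    by ucase; rw mem1.
  move=> j h1 h2; case: (eqVneq j i') => [->|ne].
    by rewrite (_ : i'.+1 == i' = false) //; apply/negbTE; lia.
  rewrite (_ : j.+1 == i' = false); last by apply/negbTE; lia.
  apply: hk2; lia.
- by split.
Qed.

End BT.

Definition s_res : stmt := If (BEq (V vF) (Const 1)) s_back (Store (Const 0) (Const 0)).

Definition s_main : stmt :=
  Seq (Store (Const vN) (V 0)) (Seq (Store (Const vM) (V 1))
  (Seq s_pre (Seq (Store (Const vF) (Const 0)) (Seq (Store (Const vt) (Const 0))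
  (Seq s_tloop s_res))))).

Definition prog : stmt := If (BEq (V 1) (Const 0)) (Store (Const 0) (Const 1)) s_main.

Section Fin.
Variables (n m : nat) (v : 'I_n -> 'I_m -> nat).

Lemma pre_ok mem : Base n m mem -> Inp v mem ->
  exists mem' t, exec s_pre mem t mem' /\ (Base n m mem' /\ Ptab v n mem') /\
    t <= 3 + (n * (m * 3 + 6).+1 + 1).
Proof.
move=> hb hinp; have [hN hM] := hb.
eapply seq_ex; first (apply: store_ex; reflexivity).
eapply seq_ex; first (apply: store_ex; reflexivity).
eapply seq_ex; first (apply: store_ex; reflexivity).
set mem1 := update _ _ _.
have H1 : InvPO v 0 mem1.
  rewrite /mem1; cbn [aeval].
  split; first by split; ucase.
  split; first by move=> i j jm; ucase; apply: hinp.
  split; first by move=> i b; rewrite ltn0.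
  by split; ucase.
have [mem2 [t2 [e2 [[hb2 [_ [hp2 _]]] tc2]]]] := pre_outer H1.
exists mem2, t2; split=> //; split=> //; lia.
Qed.

Lemma if_true_ex b s1 s2 mem (R : memory -> nat -> Prop) :
  beval mem b = true -> (exists mem' t, exec s1 mem t mem' /\ R mem' t.+1) ->
  exists mem' t, exec (If b s1 s2) mem t mem' /\ R mem' t.
Proof. move=> E [mem' [t [e r]]]; exists mem', t.+1; split=> //; exact: ExIfT. Qed.

Definition Out mem := exists k : nat -> nat,
  (forall i, i <= n -> mem (Z.of_nat i.+1) = Z.of_nat (k i)) /\ k 0 = 0 /\ k n = m /\
  exists T, forall j, j < n -> k j <= k j.+1 /\ pre v j (k j.+1) = pre v j (k j) + T.

Lemma res_ok k mem : TI v k mem -> beval mem tcond = false ->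
  exists mem' t, exec s_res mem t mem' /\
   ((mem' 0%Z = 1%Z /\ Out mem') \/
    (mem' 0%Z = 0%Z /\ forall t', t' <= m -> reach v (pre v 0 t') n m = false)) /\
   t <= n * 5 + 6.
Proof.
move=> [tt [hb [hp [ht [[hF [tm [hno ek]]] | [hF [tm [hr [hq [hI [hW _]]]]]]]]]]] Ec.
-
  have [hN hM] := hb.
  have tt1 : tt = m.+1.
    move: Ec; rewrite /tcond /= hM ht hF /= andbT leb_negZ; lia.
  eapply last_ex.
    apply: ExIfF; first by rewrite /= hF.
    apply: store_ex; reflexivity.
  split; last lia.
  right; split; first by cbn [aeval]; ucase.
  move=> t' t'm; apply: hno; lia.
- have [hN hM] := hb.
  set T := pre v 0 tt in hr hq.
  eapply if_true_ex; first by rewrite /= hF.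
  eapply seq_ex; first (apply: store_ex; reflexivity).
  eapply seq_ex; first (apply: store_ex; reflexivity).
  set mem1 := update _ _ _.
  have H1 : BI v T 0 mem1.
    rewrite /mem1; cbn [aeval].
    split; first by split; ucase; rw mem; lia.
    split; first by move=> i b h1 h2; ucase; exact: hq.
    rewrite subn0.
    split; first by ucase; rw mem.
    split; first by ucase; rw mem.
    exists (fun _ => m); split; first by ucase; rw mem.
    split=> //.
    split; last by move=> j h1 h2; lia.
    move=> j h1 h2; have -> : j = n by lia.
    split; first by ucase; rw mem; lia.
    by [].
  have [mem2 [t2 [e2 [H2 tc2]]]] := bt_ok H1.
  eapply seq_ex; first exact: e2.
  eapply last_ex; first (apply: store_ex; reflexivity).
  split; last lia.
  left; split; first by ucase.
  have [_ [_ [_ [_ [k' [_ [kn [hk1 hk2]]]]]]]] := H2.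
  rewrite subnn in hk1 hk2.
  exists k'; split.
    move=> i iN; have [e _] := hk1 i (leq0n _) iN; by ucase.
  split.
    have [_ [r _]] := hk1 0 (leqnn 0) (leq0n n).
    by move/eqP: r.
  split=> //.
  exists T => j jn; exact: hk2.
Qed.

End Fin.

Lemma if_false_ex b s1 s2 mem (R : memory -> nat -> Prop) :
  beval mem b = false -> (exists mem' t, exec s2 mem t mem' /\ R mem' t.+1) ->
  exists mem' t, exec (If b s1 s2) mem t mem' /\ R mem' t.
Proof. move=> E [mem' [t [e r]]]; exists mem', t.+1; split=> //; exact: ExIfF. Qed.

Lemma bound_ok n m t2 t4 t5 : 0 < n -> 0 < m ->
  t2 <= 3 + (n * (m * 3 + 6).+1 + 1) ->
  t4 <= (2 * m.+1 + 1) * (n * (m.+1 * (m.+1 * 4 + 4).+1 + 4).+1 + m * 3 + 9).+1 + 1 ->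
  t5 <= n * 5 + 6 ->
  (1 + (1 + (t2 + (1 + (1 + (t4 + t5)))))).+1 <= 1000 * (n * m ^ 3 + 1).
Proof.
move=> n0 m0 h2 h4 h5.
have e3 : m ^ 3 = m * m * m by rewrite !expnS expn0 muln1 mulnA.
rewrite e3.
nia.
Qed.

Lemma inp_m0 n (v : 'I_n -> 'I_0 -> nat) x : x <> 0%Z -> input_memory v x = 0%Z.
Proof.
move=> x0; rewrite /input_memory.
case: Z.eqb_spec => // _; case: Z.eqb_spec => // _.
case: (2 <=? x)%Z => //.
case: insub => [i|] //; case: insub => [[j jlt]|] //.
Qed.

Lemma inp01 n m (v : 'I_n -> 'I_m -> nat) :
  input_memory v 0%Z = Z.of_nat n /\ input_memory v 1%Z = Z.of_nat m.
Proof. by split. Qed.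

Theorem mainTheorem3 :
  exists (P : stmt) (c : nat),
  forall (n m : nat) (v : 'I_n -> 'I_m -> nat),
    items_positively_valued v ->
    exists (mem' : memory) (t : nat),
      exec P (input_memory v) t mem' /\
      t <= c * (n * m ^ 3 + 1) /\
      (mem' 0%Z = 1%Z <->
         exists A : 'I_n -> {set 'I_m},
           is_allocation A /\ order_consistent_contiguous A /\ equitable v A) /\
      (mem' 0%Z = 1%Z ->
         exists k : nat -> nat,
           (forall i, i <= n -> mem' (Z.of_nat i.+1) = Z.of_nat (k i)) /\
           cut_indices n m k /\
           equitable v (@alloc_of_cuts n m k)).
Proof.
exists prog, 1000 => n m v Hpos.
have [h0 h1] := inp01 v.
case: (posnP m) => [m0 | mpos].
- subst m.
  have [Hc Heq] := @from_chain n 0 v 0 (fun _ => 0) erefl erefl (fun j _ => conj (leqnn 0) (esym (addn0 _))).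
  exists (update (input_memory v) 0 1), 2; split.
    apply: ExIfT; first by cbn [beval aeval]; rewrite h1.
    exact: store_ex.
  split; first lia.
  split.
    split=> // _; exists (@alloc_of_cuts n 0 (fun _ => 0)); split; first exact: cuts_alloc.
    split=> //; by exists (fun _ => 0); split.
  move=> _; exists (fun _ => 0); split=> //.
  move=> i iN; rewrite upd_o; last lia.
  by rewrite inp_m0 //; lia.
- have n0 : 0 < n by have [i _] := Hpos (Ordinal mpos); exact: leq_ltn_trans (leq0n i) (ltn_ord i).
  eapply if_false_ex; first by cbn [beval aeval]; rewrite h1; case: Z.eqb_spec => //; lia.
  set mem0 := input_memory v in h0 h1 *.
  have hinp0 : Inp v mem0 by move=> i j jm; rewrite /mem0 input_ok.
  eapply seq_ex; first (apply: store_ex; reflexivity).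
  eapply seq_ex; first (apply: store_ex; reflexivity).
  set mem1 := update _ _ _.
  have hb1 : Base n m mem1 by rewrite /mem1; cbn [aeval]; split; ucase.
  have hi1 : Inp v mem1 by rewrite /mem1; move=> i j jm; cbn [aeval]; ucase; apply: hinp0.
  have [mem2 [t2 [e2 [[hb2 hp2] tc2]]]] := pre_ok hb1 hi1.
  eapply seq_ex; first exact: e2.
  eapply seq_ex; first (apply: store_ex; reflexivity).
  eapply seq_ex; first (apply: store_ex; reflexivity).
  set mem3 := update _ _ _.
  have hb3 : Base n m mem3 by have [hN hM] := hb2; rewrite /mem3; cbn [aeval]; split; ucase.
  have hp3 : Ptab v n mem3 by rewrite /mem3; move=> i b h h'; cbn [aeval]; ucase; apply: hp2.
  have ht3 : mem3 vt = 0%Z by rewrite /mem3; cbn [aeval]; ucase.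
  have hF3 : mem3 vF = 0%Z by rewrite /mem3; cbn [aeval]; ucase.
  have [mem4 [t4 [e4 [[k4 H4] [E4 tc4]]]]] := tloop_ok n0 hb3 hp3 ht3 hF3.
  eapply seq_ex; first exact: e4.
  have [mem5 [t5 [e5 [H5 tc5]]]] := res_ok H4 E4.
  eapply last_ex; first exact: e5.
  split; first by apply: bound_ok.
  case: H5 => [[o1 [k [ko [k0 [kn [T hch]]]]]] | [o0 hno]].
  + have [Hc Heq] := from_chain k0 kn hch.
    split.
      split=> // _; exists (@alloc_of_cuts n m k); split; first exact: cuts_alloc.
      split=> //; by exists k; split.
    by move=> _; exists k.
  + split.
      split; first by rewrite o0.
      move=> [A [_ [Hoc Heq]]].
      have [t' [tm r]] := exists_T n0 Hoc Heq.
      by rewrite hno in r.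
    by rewrite o0.
Qed.
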